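(* Let $N\ge 1$, let $\mathbf{x}\in\mathbb{R}^N$ and let $\mathcal{F}=\mathrm{DFT}(\mathbf{x})\in\mathbb{C}^N$ be its frequency spectrum. Let $\mathbf{W}\in\mathbb{C}^{N\times N}$ be a weight matrix and $\mathbf{b}\in\mathbb{C}^N$ a bias vector, and set $\tilde{\mathcal{F}}=\mathbf{W}\mathcal{F}+\mathbf{b}$. For $i=0,1,\dots,N-1$ define $$w_i=\left[\mathrm{diag}(\mathbf{W},i),\ \mathrm{diag}(\mathbf{W},i-N)\right]\in\mathbb{C}^N,\qquad \Omega_i=\mathrm{IDFT}(w_i)\in\mathbb{C}^N,$$ $$\mathcal{M}_i(\mathbf{x})=\mathbf{x}\odot\left[e^{-j\frac{2\pi}{N}ik}\right]_{k=0,1,\dots,N-1}\in\mathbb{C}^N .$$ Then $$\mathrm{IDFT}(\tilde{\mathcal{F}})=\sum_{i=0}^{N-1}\Omega_i\circledast\mathcal{M}_i(\mathbf{x})+\mathrm{IDFT}(\mathbf{b}),$$ i.e. $\tilde{\mathcal{F}}=\mathbf{W}\mathcal{F}+\mathbf{b}$ and $\sum_{i=0}^{N-1}\Omega_i\circledast\mathcal{M}_i(\mathbf{x})+\mathrm{IDFT}(\mathbf{b})$ form a DFT pair.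
   Context: Vectors are indexed from $0$ to $N-1$ and $j$ denotes the imaginary unit. The discrete Fourier transform of $\mathbf{x}\in\mathbb{C}^N$ is $\mathrm{DFT}(\mathbf{x})[k]=\sum_{n=0}^{N-1}e^{-j\frac{2\pi}{N}nk}\mathbf{x}[n]$, and the inverse is $\mathrm{IDFT}(\mathcal{F})[n]=\frac{1}{N}\sum_{k=0}^{N-1}\mathcal{F}[k]e^{j\frac{2\pi}{N}kn}$. The symbol $\circledast$ denotes circular convolution, $(\mathbf{u}\circledast\mathbf{v})[n]=\sum_{m=0}^{N-1}\mathbf{u}[m]\mathbf{v}[(n-m)\bmod N]$; $\odot$ is the Hadamard (element-wise) product; $[\cdot,\cdot]$ denotes concatenation of two vectors. For an integer $i$ with $|i|<N$, $\mathrm{diag}(\mathbf{W},i)\in\mathbb{C}^{N-|i|}$ is the $i$-th diagonal of $\mathbf{W}$: for $i\ge 0$ it is $(\mathbf{W}[0,i],\mathbf{W}[1,i+1],\dots,\mathbf{W}[N-1-i,N-1])$ (the main diagonal for $i=0$, a diagonal above it for $i>0$), and for $i<0$ it is $(\mathbf{W}[-i,0],\mathbf{W}[-i+1,1],\dots,\mathbf{W}[N-1,N-1+i])$ (a diagonal below the main one); by convention $\mathrm{diag}(\mathbf{W},-N)=\emptyset$ (the empty vector). $\mathcal{M}_i(\mathbf{x})$ is called the $i$-th modulated version of $\mathbf{x}$, with $\mathcal{M}_0(\mathbf{x})=\mathbf{x}$. *)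

(* Defs.v *)
From HB Require Import structures.
From mathcomp Require Import all_boot all_order all_algebra.
From mathcomp Require Import all_classical all_reals.
From mathcomp Require Import trigo.
From mathcomp.real_closed Require Import complex.
Set Implicit Arguments. Unset Strict Implicit. Unset Printing Implicit Defensive.
Import Order.TTheory GRing.Theory Num.Theory.
Local Open Scope ring_scope.

Section DFTdefs.
Variable R : realType.
Local Notation C := R[i].

Definition expj (t : R) : C := Complex (cos t) (sin t).

Variable N : nat.

Definition DFT (x : 'cV[C]_N) : 'cV[C]_N :=
  \col_(k < N) \sum_(n < N) expj (- (2 * pi * n%:R * k%:R / N%:R)) * x n ord0.

Definition IDFT (F : 'cV[C]_N) : 'cV[C]_N :=
  \col_(n < N) ((N%:R)^-1 * \sum_(k < N) F k ord0 * expj (2 * pi * k%:R * n%:R / N%:R)).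

Lemma ord_gt0 (i : 'I_N) : (0 < N)%N.
Proof. by case: i => m; apply: leq_ltn_trans. Qed.

Definition subI (n m : 'I_N) : 'I_N :=
  Ordinal (ltn_pmod (n + N - m) (ord_gt0 n)).

Definition circconv (u v : 'cV[C]_N) : 'cV[C]_N :=
  \col_(n < N) \sum_(m < N) u m ord0 * v (subI n m) ord0.

Definition mxn (W : 'M[C]_N) (a b : nat) : C :=
  match @insub _ (fun k => (k < N)%N) 'I_N a, @insub _ (fun k => (k < N)%N) 'I_N b with
  | Some p, Some q => W p q
  | _, _ => 0
  end.

(* diag(W, i): the i-th diagonal, of length N - |i| (empty for |i| >= N) *)
Definition mdiag (W : 'M[C]_N) (i : int) : seq C :=
  match i with
  | Posz m => [seq mxn W k (k + m) | k <- iota 0 (N - m)]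
  | Negz _ => let m := `|i|%N in [seq mxn W (k + m) k | k <- iota 0 (N - m)]
  end.

Definition wvec (W : 'M[C]_N) (i : 'I_N) : 'cV[C]_N :=
  \col_(k < N) nth 0 (mdiag W (i%:Z) ++ mdiag W (i%:Z - N%:Z)) k.

Definition Omega (W : 'M[C]_N) (i : 'I_N) : 'cV[C]_N := IDFT (wvec W i).

Definition modul (i : 'I_N) (x : 'cV[C]_N) : 'cV[C]_N :=
  \col_(k < N) (x k ord0 * expj (- (2 * pi * i%:R * k%:R / N%:R))).

End DFTdefs.

(* Main.v *)
Require Import Defs.
From HB Require Import structures.
From mathcomp Require Import all_boot all_order all_algebra.
From mathcomp Require Import all_classical all_reals.
From mathcomp Require Import trigo.
From mathcomp.real_closed Require Import complex.
From mathcomp Require Import zify lra ring.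
Import Order.TTheory GRing.Theory Num.Theory.
Local Open Scope ring_scope.
Definition ee (R : realType) (N : nat) (z : int) : R[i] :=
  expj (2 * pi * z%:~R / N%:R).

Lemma expjD (R : realType) (s t : R) : expj (s + t) = expj s * expj t.
Proof. by rewrite /expj cosD sinD; apply/eqP; rewrite eq_complex /= !eqxx andTb; apply/eqP; ring. Qed.

Lemma eeD (R : realType) N (a b : int) : ee R N (a + b) = ee R N a * ee R N b.
Proof. by rewrite /ee -expjD rmorphD /= !mulrDr !mulrDl. Qed.

Lemma ee0 (R : realType) N : ee R N 0 = 1.
Proof. by rewrite /ee mulr0 mul0r /expj cos0 sin0. Qed.

Lemma eeN1 (R : realType) N : (0 < N)%N -> ee R N N%:Z = 1.
Proof.
move=> hN; rewrite /ee.
have -> : 2 * pi * (N%:Z)%:~R / N%:R = pi *+ 2 :> R.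
  rewrite -pmulrn -mulrA mulfV; last by rewrite pnatr_eq0 -lt0n.
  by rewrite mulr1 mulrC mulr_natr.
by rewrite /expj cos2pi sin2pi.
Qed.

Lemma eeM (R : realType) N : (0 < N)%N -> forall c : int, ee R N (c * N%:Z) = 1.
Proof.
move=> hN.
have hp : forall n : nat, ee R N (n%:Z * N%:Z) = 1.
  elim=> [|n IH]; first by rewrite mul0r ee0.
  by rewrite -addn1 PoszD mulrDl eeD IH !mul1r eeN1.
case=> [n|n]; first exact: hp.
have := ee0 R N; rewrite -(addNr (Posz n.+1 * N%:Z)) eeD hp mulr1 => <-.
by rewrite NegzE mulNr.
Qed.

Lemma ee_congr (R : realType) N : (0 < N)%N -> forall a b c : int, a = b + c * N%:Z -> ee R N a = ee R N b.
Proof. by move=> hN a b c ->; rewrite eeD eeM // mulr1. Qed.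
Definition addI {N : nat} (k i : 'I_N) : 'I_N := Ordinal (ltn_pmod (k + i) (ord_gt0 k)).

Lemma mxnE (R : realType) N (W : 'M[R[i]]_N) (p q : 'I_N) a b :
  a = p :> nat -> b = q :> nat -> mxn W a b = W p q.
Proof.
move=> -> ->; rewrite /mxn.
case: insubP => [p' _ /val_inj ->|]; last by rewrite ltn_ord.
by case: insubP => [q' _ /val_inj ->|]; last by rewrite ltn_ord.
Qed.

Lemma wvecE (R : realType) N (W : 'M[R[i]]_N) (i k : 'I_N) :
  wvec W i k ord0 = W k (addI k i).
Proof.
rewrite /wvec mxE.
have hi := ltn_ord i; have hk := ltn_ord k.
have -> : i%:Z - N%:Z = Negz (N - i - 1).
  rewrite NegzE; lia.
rewrite /mdiag nth_cat size_map size_iota.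
case: ltnP => hki.
  rewrite (nth_map 0%N) ?size_iota // nth_iota // add0n.
  apply: mxnE => //=; rewrite modn_small //; lia.
have -> : `|Negz (N - i - 1)|%N = (N - i)%N by rewrite /= ; lia.
rewrite (nth_map 0%N) ?size_iota; last lia.
rewrite nth_iota; last lia.
apply: mxnE => /=; first lia.
have -> : (k + i = (k + i - N) + N)%N by lia.
rewrite modnDr modn_small; lia.
Qed.

Lemma mod2 N a : (0 < N)%N -> (a < 2 * N)%N -> (a %% N = if a < N then a else a - N)%N.
Proof.
move=> h0 h2; case: ltnP => h; first by rewrite modn_small.
have -> : a = ((a - N) + N)%N by lia.
rewrite modnDr modn_small; lia.
Qed.

Lemma subIv N (n p : 'I_N) : (subI n p : nat) = if (n + N - p < N)%N then (n + N - p)%N else (n + N - p - N)%N.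
Proof. have := ltn_ord n; have := ltn_ord p => *; rewrite /= mod2; lia. Qed.

Lemma addIv N (n p : 'I_N) : (addI n p : nat) = if (n + p < N)%N then (n + p)%N else (n + p - N)%N.
Proof. have := ltn_ord n; have := ltn_ord p => *; rewrite /= mod2; lia. Qed.

Lemma subI_inv N (n p : 'I_N) : subI n (subI n p) = p.
Proof.
apply: ord_inj; have := ltn_ord n; have := ltn_ord p => *.
rewrite !subIv; repeat case: ifP; lia.
Qed.

Lemma addI_subI N (k m : 'I_N) : addI k (subI m k) = m.
Proof.
apply: ord_inj; have := ltn_ord k; have := ltn_ord m => *.
rewrite addIv subIv; repeat case: ifP; lia.
Qed.

Lemma subI_addI N (k i : 'I_N) : subI (addI k i) k = i.
Proof.
apply: ord_inj; have := ltn_ord k; have := ltn_ord i => *.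
rewrite subIv addIv; repeat case: ifP; lia.
Qed.

Lemma subIz N (n p : 'I_N) :
  (subI n p)%:Z = n%:Z - p%:Z + (1 - ((n + N - p) %/ N)%N%:Z) * N%:Z.
Proof.
rewrite /=.
have hp := ltn_ord p.
have := divn_eq (n + N - p) N.
set q := ((n + N - p) %/ N)%N; set r := ((n + N - p) %% N)%N => e.
lia.
Qed.

Lemma expjN (R : realType) N (a b : nat) :
  expj (- (2 * pi * a%:R * b%:R / N%:R)) = ee R N (- (a%:Z * b%:Z)) :> R[i].
Proof. by rewrite /ee rmorphN rmorphM /= !pmulrn; congr expj; ring. Qed.

Lemma expjP (R : realType) N (a b : nat) :
  expj (2 * pi * a%:R * b%:R / N%:R) = ee R N (a%:Z * b%:Z) :> R[i].
Proof. by rewrite /ee rmorphM /= !pmulrn; congr expj; ring. Qed.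

Lemma key (R : realType) N (hN : (0 < N)%N) (n k m p : 'I_N) :
  ee R N (k%:Z * (subI n p)%:Z) * ee R N (- ((subI m k)%:Z * p%:Z)) =
  ee R N (- (p%:Z * m%:Z)) * ee R N (k%:Z * n%:Z).
Proof.
rewrite -!eeD.
apply: (@ee_congr R N hN _ _ (k%:Z * (1 - ((n + N - p) %/ N)%N%:Z) - (1 - ((m + N - k) %/ N)%N%:Z) * p%:Z)).
rewrite !subIz; ring.
Qed.

Arguments subI_inv {N}.
Arguments addI_subI {N}.

Theorem theorem1 (R : realType) (N : nat) (hN : (1 <= N)%N)
  (x : 'cV[R]_N) (W : 'M[R[i]]_N) (b : 'cV[R[i]]_N) :
  let xc : 'cV[R[i]]_N := map_mx (fun r : R => Complex r 0) x in
  let F := DFT xc in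
  let Ft := W *m F + b in
  IDFT Ft = \sum_(i < N) circconv (Omega W i) (modul i xc) + IDFT b.
Proof.
move=> xc F Ft.
apply/matrixP => n j; rewrite ord1 {j}.
rewrite /Ft /IDFT mxE [in RHS]mxE summxE [X in _ = _ + X]mxE.
under eq_bigr do rewrite mxE [(W *m F) _ _]mxE mulrDl.
rewrite big_split /= mulrDr; congr (_ + _).
under [in RHS]eq_bigr do rewrite mxE.
set X := fun p => xc p ord0.
transitivity (N%:R^-1 * \sum_(k < N) \sum_(m < N) \sum_(p < N)
   W k m * X p * (ee R N (- (p%:Z * m%:Z)) * ee R N (k%:Z * n%:Z))).
  congr (_ * _); apply: eq_bigr => k _; rewrite mulr_suml; apply: eq_bigr => m _.
  rewrite /F mxE mulr_sumr mulr_suml; apply: eq_bigr => p _.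
  rewrite expjN expjP /X; ring.
under eq_bigr => i _ do rewrite (reindex_inj (can_inj (subI_inv n))) /=.
transitivity (N%:R^-1 * \sum_(i < N) \sum_(p < N) \sum_(k < N)
   W k (addI k i) * X p * (ee R N (k%:Z * (subI n p)%:Z) * ee R N (- (i%:Z * p%:Z)))); last first.
  rewrite mulr_sumr; apply: eq_bigr => i _; rewrite mulr_sumr; apply: eq_bigr => p _.
  rewrite /Omega /IDFT !mxE subI_inv.
  rewrite -[RHS]mulrA mulr_suml; congr (_ * _); apply: eq_bigr => k _.
  rewrite wvecE expjN expjP /X /xc mxE; ring.
congr (_ * _).
under [RHS]eq_bigr => i _ do rewrite exchange_big.
rewrite [RHS]exchange_big; apply: eq_bigr => k _.
rewrite [RHS](reindex_inj (can_inj (addI_subI k))); apply: eq_bigr => m _.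
rewrite addI_subI; apply: eq_bigr => p _.
by rewrite key.
Qed.
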